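(* Consider the remote control problem described in the context. Without any loss of optimality, at each time $t$ the knowledge of the encoder can be summarized by the tuple $\langle s_t,\Delta_t,s_{t-\Delta_t}\rangle$ and the knowledge of the decoder by the tuple $\langle \Delta_t,s_{t-\Delta_t}\rangle$. That is, restricting the encoder's communication policy to be a function of $\langle s_t,\Delta_t,s_{t-\Delta_t}\rangle$ and the decoder's control policy to be a function of $\langle \Delta_t,s_{t-\Delta_t}\rangle$ does not decrease the optimal value of the objective $\mathbb{E}\big[\sum_{t=0}^\infty \gamma^t (r_t-\beta c_t)\big]$ compared with general causal policies.
   Context: Let $\mathcal{S}$ be a finite state set, $\mathcal{A}$ a finite set of control actions, and for each $a\in\mathcal{A}$ let $\mathbf{P}^a$ be an $|\mathcal{S}|\times|\mathcal{S}|$ stochastic matrix ($P^a_{s,s'}$ is the probability of moving from $s$ to $s'$ under action $a$). Let $r:\mathcal{S}\times\mathcal{A}\times\mathcal{S}\to\mathbb{R}$ be a reward function, written $r_{s,s'}(a)$, let $\gamma\in[0,1)$ be a discount factor and $\beta>0$ a communication cost. A Markov process $s_0,s_1,\dots$ evolves with $s_{t+1}\sim P^{a_t}_{s_t,\cdot}$. At each time $t$ an encoder observes $s_t$ and chooses $c_t\in\{0,1\}$; the decoder then observes $o_t=s_t$ if $c_t=1$ and $o_t=\chi$ (a symbol meaning ''no transmission'') if $c_t=0$, and chooses a control action $a_t\in\mathcal{A}$; the reward is $r_t=r_{s_t,s_{t+1}}(a_t)$. Policies are causal: the encoder's decision at time $t$ may depend on everything it has observed up to time $t$ (states $s_{0:t}$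 and past decoder observations), and the decoder's action may depend on its observations $o_{0:t}$ and its past actions. The objective is to maximize $\mathbb{E}\big[\sum_{t=0}^\infty\gamma^t(r_t-\beta c_t)\big]$. $\Delta_t$ denotes the time elapsed since the last transmission (so $s_{t-\Delta_t}$ is the last state transmitted to the decoder). *)

(* Defs.v *)
From HB Require Import structures.
From mathcomp Require Import all_boot all_order all_algebra.
From mathcomp Require Import all_classical all_reals all_analysis.
Set Implicit Arguments. Unset Strict Implicit. Unset Printing Implicit Defensive.
Import Order.TTheory GRing.Theory Num.Theory numFieldNormedType.Exports.
Local Open Scope ring_scope.

Section RemoteControl.
Variables (R : realType) (S A : finType).

(* Decoder observations o_i for past states hs = s_0..s_k and encoder
   decisions cs = c_0..c_k : Some s_i if c_i = 1, None (= chi) otherwise. *)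
Definition obs_of (hs : seq S) (cs : seq bool) : seq (option S) :=
  [seq if p.2 then Some p.1 else None | p <- zip hs cs].

(* summary os = (Delta, last transmitted state) after the observation sequence
   os = o_0..o_t : Delta = t - i and Some s_i for the last i with o_i = Some s_i;
   if no transmission has occurred, Delta = t+1 (time since a virtual time -1)
   and the last transmitted state is None. *)
Definition summary (os : seq (option S)) : nat * option S :=
  foldl (fun dl o => match o with
                     | Some s => (0%N, Some s)
                     | None => (dl.1.+1, dl.2)
                     end) (0%N, None) os.

Variables (P : A -> S -> S -> R) (r : S -> A -> S -> R) (gamma beta : R).

(* General causal (possibly randomized) policies.
   enc hs s cs : probability that c_t = 1, given past states hs = s_0..s_{t-1},
                 current state s = s_t and past decisions cs = c_0..c_{t-1}
                 (which, together with the states, determine the past decoder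
                 observations).
   dec os as a : probability that a_t = a, given observations os = o_0..o_t
                 and past actions as = a_0..a_{t-1}. *)
Variables (enc : seq S -> S -> seq bool -> R)
          (dec : seq (option S) -> seq A -> A -> R).

(* Expected discounted reward collected from time t = size cs during k more
   steps, given the history (hs, s, cs, as_) up to time t. *)
Fixpoint Vk (k : nat) (s : S) (hs : seq S) (cs : seq bool) (as_ : seq A) : R :=
  match k with
  | 0 => 0
  | k'.+1 =>
    \sum_(c : bool)
      (if c then enc hs s cs else 1 - enc hs s cs) *
      \sum_(a : A) dec (obs_of (rcons hs s) (rcons cs c)) as_ a *
        \sum_(s' : S) P a s s' *
          (gamma ^+ size cs * (r s a s' - beta * (c : nat)%:R)
           + Vk k' s' (rcons hs s) (rcons cs c) (rcons as_ a))
  end.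

End RemoteControl.

Definition Jfin (R : realType) (S A : finType) (P : A -> S -> S -> R)
  (r : S -> A -> S -> R) (gamma beta : R) (mu0 : S -> R)
  (enc : seq S -> S -> seq bool -> R) (dec : seq (option S) -> seq A -> A -> R)
  (T : nat) : R :=
  \sum_(s0 : S) mu0 s0 * Vk P r gamma beta enc dec T s0 [::] [::] [::].

Definition Jinf (R : realType) (S A : finType) (P : A -> S -> S -> R)
  (r : S -> A -> S -> R) (gamma beta : R) (mu0 : S -> R)
  (enc : seq S -> S -> seq bool -> R) (dec : seq (option S) -> seq A -> A -> R)
  : R :=
  limn (fun T => Jfin P r gamma beta mu0 enc dec T).

Definition enc_valid (R : realType) (S : finType)
  (enc : seq S -> S -> seq bool -> R) : Prop :=
  forall hs s cs, 0 <= enc hs s cs <= 1.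

Definition dec_valid (R : realType) (S A : finType)
  (dec : seq (option S) -> seq A -> A -> R) : Prop :=
  forall os as_, (forall a, 0 <= dec os as_ a) /\ \sum_(a : A) dec os as_ a = 1.

(* The encoder sees <s_t, Delta_t, s_{t-Delta_t}> where Delta_t is computed
   before the decision c_t (last transmission strictly before t);
   the decoder sees <Delta_t, s_{t-Delta_t}> after observing o_t. *)
Definition enc_struct (R : realType) (S : finType)
  (f : S -> nat -> option S -> bool) : seq S -> S -> seq bool -> R :=
  fun hs s cs =>
    let dl := summary (rcons (obs_of hs cs) None) in
    ((f s dl.1 dl.2 : nat)%:R : R).

Definition dec_struct (R : realType) (S A : finType)
  (g : nat -> option S -> A) : seq (option S) -> seq A -> A -> R :=
  fun os _ a =>
    let dl := summary os in (((a == g dl.1 dl.2) : nat)%:R : R).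

(* Main.v *)
Require Import Defs.
From HB Require Import structures.
From mathcomp Require Import all_boot all_order all_algebra.
From mathcomp Require Import all_classical all_reals all_analysis.
From mathcomp Require Import lra ring.
Set Implicit Arguments. Unset Strict Implicit. Unset Printing Implicit Defensive.
Import Order.TTheory GRing.Theory Num.Theory numFieldNormedType.Exports.
Local Open Scope ring_scope.

Section Main.
Variables (R : realType) (S A : finType).
Variables (P : A -> S -> S -> R) (r : S -> A -> S -> R) (gamma beta : R).
Hypothesis HP0 : forall a s s', 0 <= P a s s'.
Hypothesis HP1 : forall a s, \sum_(s' : S) P a s s' = 1.
Hypothesis Hg0 : 0 <= gamma.
Hypothesis Hg1 : gamma < 1.
Hypothesis Hb : 0 < beta.

Local Notation V := (Vk P r gamma beta).

Lemma obs_rcons (hs : seq S) cs s (c : bool) : size hs = size cs ->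
  obs_of (rcons hs s) (rcons cs c) = rcons (obs_of hs cs) (if c then Some s else None).
Proof. by move=> e; rewrite /obs_of zip_rcons // map_rcons. Qed.

Lemma summary_rcons (os : seq (option S)) o : summary (rcons os o) =
  match o with Some s => (0%N, Some s) | None => ((summary os).1.+1, (summary os).2) end.
Proof. by rewrite /summary foldl_rcons. Qed.

Definition Br enc dec k s hs cs as_ (c : bool) :=
  \sum_(a : A) dec (obs_of (rcons hs s) (rcons cs c)) as_ a *
        \sum_(s' : S) P a s s' *
          (gamma ^+ size cs * (r s a s' - beta * (c : nat)%:R)
           + V enc dec k s' (rcons hs s) (rcons cs c) (rcons as_ a)).

Lemma VS enc dec k s hs cs as_ : V enc dec k.+1 s hs cs as_ =
  enc hs s cs * Br enc dec k s hs cs as_ true + (1 - enc hs s cs) * Br enc dec k s hs cs as_ false.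
Proof. by rewrite /= big_bool. Qed.

Lemma avg_le (I : finType) (w X : I -> R) B : (forall i, 0 <= w i) -> \sum_i w i = 1 ->
  (forall i, X i <= B) -> \sum_i w i * X i <= B.
Proof.
move=> w0 w1 XB; apply: (le_trans (y := \sum_i w i * B)).
  by apply: ler_sum => i _; apply: ler_wpM2l.
by rewrite -mulr_suml w1 mul1r.
Qed.

Lemma avg_ge (I : finType) (w X : I -> R) B : (forall i, 0 <= w i) -> \sum_i w i = 1 ->
  (forall i, B <= X i) -> B <= \sum_i w i * X i.
Proof.
move=> w0 w1 XB; apply: (le_trans (y := \sum_i w i * B)).
  by rewrite -mulr_suml w1 mul1r.
by apply: ler_sum => i _; apply: ler_wpM2l.
Qed.

Lemma avg_const (I : finType) (w : I -> R) c : \sum_i w i = 1 -> \sum_i w i * c = c.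
Proof. by move=> w1; rewrite -mulr_suml w1 mul1r. Qed.

Lemma le_sum_term (I : finType) (F : I -> R) i : (forall j, 0 <= F j) -> F i <= \sum_j F j.
Proof.
move=> F0; rewrite (bigD1 i) //= lerDl; apply: sumr_ge0 => j _; exact: F0.
Qed.

Definition Cr := \sum_(s : S) \sum_(a : A) \sum_(s' : S) `|r s a s'|.

Lemma r_bound s a s' : `|r s a s'| <= Cr.
Proof.
have h1 : `|r s a s'| <= \sum_(s'' : S) `|r s a s''|.
  by apply: (@le_sum_term _ (fun s'' => `|r s a s''|) s') => ?.
have h2 : \sum_(s'' : S) `|r s a s''| <= \sum_(a' : A) \sum_(s'' : S) `|r s a' s''|.
  by apply: (@le_sum_term _ (fun a' => \sum_(s'' : S) `|r s a' s''|) a) => ?; apply: sumr_ge0.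
have h3 : \sum_(a' : A) \sum_(s'' : S) `|r s a' s''| <= Cr.
  apply: (@le_sum_term _ (fun s0 => \sum_(a' : A) \sum_(s'' : S) `|r s0 a' s''|) s) => ?.
  by apply: sumr_ge0 => ? _; apply: sumr_ge0.
exact: le_trans h1 (le_trans h2 h3).
Qed.

Lemma Cr_ge0 : 0 <= Cr.
Proof. by apply: sumr_ge0 => ? _; apply: sumr_ge0 => ? _; apply: sumr_ge0. Qed.


Lemma avg_abs (I : finType) (w X : I -> R) B : (forall i, 0 <= w i) -> \sum_i w i = 1 ->
  (forall i, `|X i| <= B) -> `|\sum_i w i * X i| <= B.
Proof.
move=> w0 w1 XB; apply: le_trans (ler_norm_sum _ _ _) _.
under eq_bigr do rewrite normrM (ger0_norm (w0 _)).
exact: avg_le.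
Qed.

Lemma conv_le (e x y B : R) : 0 <= e <= 1 -> x <= B -> y <= B -> e * x + (1 - e) * y <= B.
Proof. move=> /andP[e0 e1] xB yB; nra. Qed.

Lemma conv_ge (e x y B : R) : 0 <= e <= 1 -> B <= x -> B <= y -> B <= e * x + (1 - e) * y.
Proof. move=> /andP[e0 e1] xB yB; nra. Qed.

Lemma conv_abs (e x y B : R) : 0 <= e <= 1 -> `|x| <= B -> `|y| <= B -> `|e * x + (1 - e) * y| <= B.
Proof.
move=> he; rewrite !ler_norml => /andP[x1 x2] /andP[y1 y2].
by rewrite conv_le // conv_ge.
Qed.

Definition Cb := (Cr + beta) / (1 - gamma).

Lemma g1_gt0 : 0 < 1 - gamma.
Proof. by rewrite subr_gt0. Qed.

Lemma Cb_ge0 : 0 <= Cb.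
Proof. apply: divr_ge0; last exact: ltW g1_gt0. by rewrite addr_ge0 ?Cr_ge0 ?ltW. Qed.

Lemma Cb_eq : Cr + beta + gamma * Cb = Cb.
Proof. rewrite /Cb; have h : 1 - gamma != 0 by exact: lt0r_neq0 g1_gt0. by field. Qed.

Lemma rc_bound s a s' (c : bool) : `|r s a s' - beta * (c : nat)%:R| <= Cr + beta.
Proof.
apply: le_trans (ler_normB _ _) _; apply: lerD; first exact: r_bound.
case: c => /=; [by rewrite mulr1 ger0_norm // ltW | by rewrite mulr0 normr0 ltW].
Qed.

Section Gen.
Variables (enc : seq S -> S -> seq bool -> R) (dec : seq (option S) -> seq A -> A -> R).
Hypothesis Henc : enc_valid enc.
Hypothesis Hdec : dec_valid dec.

Lemma Br_abs k s (hs : seq S) (cs : seq bool) (as_ : seq A) (c : bool) (B : R) :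
  (forall a s', `|gamma ^+ size cs * (r s a s' - beta * (c : nat)%:R)
           + V enc dec k s' (rcons hs s) (rcons cs c) (rcons as_ a)| <= B) ->
  `|Br enc dec k s hs cs as_ c| <= B.
Proof.
move=> h; apply: avg_abs; [by move=> a; case: (Hdec (obs_of (rcons hs s) (rcons cs c)) as_) => h0 _; apply: h0
  | by case: (Hdec (obs_of (rcons hs s) (rcons cs c)) as_) | ].
move=> a; apply: avg_abs => //; exact: h.
Qed.

Lemma V_bound k : forall s (hs : seq S) (cs : seq bool) (as_ : seq A), `|V enc dec k s hs cs as_| <= gamma ^+ size cs * Cb.
Proof.
elim: k => [|k IH] s hs cs as_.
  by rewrite /= normr0 mulr_ge0 ?exprn_ge0 ?Cb_ge0.
rewrite VS; apply: conv_abs; first exact: Henc.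
all: apply: Br_abs => a s'; apply: le_trans (ler_normD _ _) _;
  rewrite -Cb_eq [X in _ <= X]mulrDr; apply: lerD;
  [ rewrite normrM ger0_norm ?exprn_ge0 //; apply: ler_wpM2l; [exact: exprn_ge0| exact: rc_bound]
  | apply: le_trans (IH _ _ _ _) _; rewrite size_rcons exprS mulrA [gamma ^+ _ * _]mulrC //].
Qed.

Lemma Br_diff k s (hs : seq S) (cs : seq bool) (as_ : seq A) (c : bool) :
  Br enc dec k.+1 s hs cs as_ c - Br enc dec k s hs cs as_ c =
  \sum_(a : A) dec (obs_of (rcons hs s) (rcons cs c)) as_ a *
        \sum_(s' : S) P a s s' *
          (V enc dec k.+1 s' (rcons hs s) (rcons cs c) (rcons as_ a)
           - V enc dec k s' (rcons hs s) (rcons cs c) (rcons as_ a)).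
Proof.
rewrite /Br -sumrB; apply: eq_bigr => a _; rewrite -mulrBr -sumrB; congr (_ * _).
apply: eq_bigr => s' _; rewrite -mulrBr; congr (_ * _).
by rewrite opprD addrACA subrr add0r.
Qed.

Lemma dec0 os as_ a : 0 <= dec os as_ a.
Proof. by case: (Hdec os as_) => h _; apply: h. Qed.

Lemma dec1 os as_ : \sum_(a : A) dec os as_ a = 1.
Proof. by case: (Hdec os as_). Qed.

Lemma V_step k : forall s (hs : seq S) (cs : seq bool) (as_ : seq A),
  `|V enc dec k.+1 s hs cs as_ - V enc dec k s hs cs as_| <= gamma ^+ (size cs + k) * (Cr + beta).
Proof.
elim: k => [|k IH] s hs cs as_.
  rewrite [V _ _ 0 _ _ _ _]/= subr0 addn0 VS; apply: conv_abs; first exact: Henc.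
  - apply: Br_abs => a s'.
    rewrite [V _ _ 0 _ _ _ _]/= addr0 normrM ger0_norm ?exprn_ge0 //.
    apply: ler_wpM2l; [exact: exprn_ge0| exact: rc_bound].
  - apply: Br_abs => a s'.
    rewrite [V _ _ 0 _ _ _ _]/= addr0 normrM ger0_norm ?exprn_ge0 //.
    apply: ler_wpM2l; [exact: exprn_ge0| exact: rc_bound].
rewrite (VS _ _ k.+1) (VS _ _ k).
set e := enc hs s cs.
set x1 := Br _ _ k.+1 _ _ _ _ true; set x0 := Br _ _ k _ _ _ _ true.
set y1 := Br _ _ k.+1 _ _ _ _ false; set y0 := Br _ _ k _ _ _ _ false.
have -> : e * x1 + (1 - e) * y1 - (e * x0 + (1 - e) * y0) = e * (x1 - x0) + (1 - e) * (y1 - y0).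
  by ring.
apply: conv_abs; first exact: Henc.
all: rewrite /x1 /x0 /y1 /y0 Br_diff; apply: avg_abs; [exact: dec0 | exact: dec1 | move=> a];
  apply: avg_abs => // s'; apply: le_trans (IH _ _ _ _) _; by rewrite size_rcons addSnnS.
Qed.

End Gen.

Fixpoint Eseq (m : nat) (D : seq A -> A -> R) (F : seq A -> R) : R :=
  match m with
  | 0 => F [::]
  | m'.+1 => \sum_(a : A) D [::] a * Eseq m' (fun u => D (a :: u)) (fun u => F (a :: u))
  end.

Definition Dvalid (D : seq A -> A -> R) :=
  forall u, (forall a, 0 <= D u a) /\ \sum_(a : A) D u a = 1.

Lemma Dvalid_cons D a : Dvalid D -> Dvalid (fun u => D (a :: u)).
Proof. by move=> h u. Qed.

Lemma E_const m : forall D c, Dvalid D -> Eseq m D (fun _ => c) = c.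
Proof.
elim: m => [|m IH] D c hD //=.
under eq_bigr do rewrite IH ?Dvalid_cons //.
by rewrite -mulr_suml; case: (hD [::]) => _ ->; rewrite mul1r.
Qed.

Lemma E_le m : forall D F G, Dvalid D -> (forall u, F u <= G u) -> Eseq m D F <= Eseq m D G.
Proof.
elim: m => [|m IH] D F G hD hFG //=.
apply: ler_sum => a _; apply: ler_wpM2l; first by case: (hD [::]).
by apply: IH => //; apply: Dvalid_cons.
Qed.

Lemma E_leS m D F G : Dvalid D -> (forall a u, F (a :: u) <= G (a :: u)) ->
  Eseq m.+1 D F <= Eseq m.+1 D G.
Proof.
move=> hD hFG /=; apply: ler_sum => a _; apply: ler_wpM2l; first by case: (hD [::]).
by apply: E_le => //; apply: Dvalid_cons.
Qed.

Lemma E_add m : forall D F G, Eseq m D (fun u => F u + G u) = Eseq m D F + Eseq m D G.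
Proof.
elim: m => [|m IH] D F G //=.
by rewrite -big_split /=; apply: eq_bigr => a _; rewrite IH mulrDr.
Qed.

Lemma E_scale m : forall D k F, Eseq m D (fun u => k * F u) = k * Eseq m D F.
Proof.
elim: m => [|m IH] D k F //=.
by rewrite mulr_sumr; apply: eq_bigr => a _; rewrite IH mulrCA.
Qed.

Lemma E_sum m : forall D (I : finType) (F : I -> seq A -> R),
  Eseq m D (fun u => \sum_i F i u) = \sum_i Eseq m D (F i).
Proof.
elim: m => [|m IH] D I F //=.
rewrite exchange_big /=; apply: eq_bigr => a _; rewrite IH mulr_sumr //.
Qed.

Lemma E_ext m : forall D F G, (forall u, F u = G u) -> Eseq m D F = Eseq m D G.
Proof.
elim: m => [|m IH] D F G h //=.
by apply: eq_bigr => a _; congr (_ * _); apply: IH.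
Qed.

Lemma E_aff m D (I : finType) (w c : I -> R) k F : Dvalid D ->
  Eseq m D (fun u => \sum_i w i * (c i + k * F i u)) = \sum_i w i * (c i + k * Eseq m D (F i)).
Proof.
move=> hD; rewrite E_sum; apply: eq_bigr => i _.
by rewrite E_scale E_add E_const // E_scale.
Qed.

Lemma E_max m : forall D F, Dvalid D -> exists u, size u = m /\ Eseq m D F <= F u.
Proof.
elim: m => [|m IH] D F hD; first by exists [::].
pose X a := Eseq m (fun u => D (a :: u)) (fun u => F (a :: u)).
have [a1 _] : exists a : A, true.
  case: (pickP (@predT A)) => [a1 _|h]; first by exists a1.
  exfalso; move: (hD [::]) => [_]; rewrite big_pred0 // => /esym/eqP.
  by rewrite oner_eq0.
case: (@arg_maxP _ R A a1 xpredT X) => // ast _ hmax.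
have [u [su hu]] := IH (fun u => D (ast :: u)) (fun u => F (ast :: u)) (Dvalid_cons ast hD).
exists (ast :: u); split; first by rewrite /= su.
apply: le_trans hu; rewrite /=.
apply: (@avg_le _ (D [::]) X); [by case: (hD [::]) | by case: (hD [::]) | ].
by move=> a; apply: hmax.
Qed.



Fixpoint wv (W : S -> R) (z : R) (u : seq A) (s : S) : R :=
  match u with
  | [::] => - beta + W s + z
  | a :: u' => Num.max (- beta + W s)
                 (\sum_(s' : S) P a s s' * (r s a s' + gamma * wv W z u' s'))
  end.

Definition cont W z a u s := \sum_(s' : S) P a s s' * (r s a s' + gamma * wv W z u s').

Lemma wv_cons W z a u s : wv W z (a :: u) s = Num.max (- beta + W s) (cont W z a u s).
Proof. by []. Qed.

Definition G W z (v : seq A) x := if v is a :: u then cont W z a u x else 0.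

Lemma max_le2 (x1 y1 x2 y2 c : R) : x1 <= x2 + c -> y1 <= y2 + c ->
  Num.max x1 y1 <= Num.max x2 y2 + c.
Proof.
move=> h1 h2; rewrite ge_max; apply/andP; split.
  by apply: le_trans h1 _; rewrite lerD2r le_max lexx.
by apply: le_trans h2 _; rewrite lerD2r le_max lexx orbT.
Qed.

Lemma cont_shift W1 W2 z1 z2 a u s c : 0 <= c ->
  (forall s', wv W1 z1 u s' <= wv W2 z2 u s' + c) ->
  cont W1 z1 a u s <= cont W2 z2 a u s + gamma * c.
Proof.
move=> c0 h; rewrite /cont -[X in _ <= _ + X](@avg_const _ (P a s) (gamma * c) (HP1 a s)) -big_split /=.
apply: ler_sum => s' _; rewrite -mulrDr; apply: ler_wpM2l => //.
rewrite -addrA lerD2l -mulrDr; apply: ler_wpM2l => //.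
Qed.

Lemma wv_shift W1 W2 z c : 0 <= c -> (forall s, W1 s <= W2 s + c) ->
  forall u s, wv W1 z u s <= wv W2 z u s + c.
Proof.
move=> c0 hW; elim=> [|a u IH] s /=.
  by have := hW s; lra.
apply: max_le2; first by rewrite -addrA lerD2l.
apply: le_trans (cont_shift a s c0 IH) _; rewrite lerD2l.
by rewrite -[X in _ <= X]mul1r ler_wpM2r // ltW.
Qed.

Lemma wv_z W z : 0 <= z -> forall u s, wv W z u s <= wv W 0 u s + gamma ^+ size u * z.
Proof.
move=> z0; elim=> [|a u IH] s /=.
  by rewrite addr0 expr0 mul1r.
apply: max_le2; first by rewrite lerDl mulr_ge0 // exprn_ge0.
rewrite exprS -mulrA; apply: cont_shift => //; exact: mulr_ge0 (exprn_ge0 _ _) z0.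
Qed.

Definition Bw (M z : R) := beta + M + z + Cr / (1 - gamma).

Lemma wv_bound W z M : 0 <= M -> 0 <= z -> (forall s, `|W s| <= M) ->
  forall u s, `|wv W z u s| <= Bw M z.
Proof.
move=> M0 z0 hW; elim=> [|a u IH] s /=.
  have := hW s; rewrite !ler_norml => /andP[h1 h2].
  have hq : 0 <= Cr / (1 - gamma) by rewrite divr_ge0 ?Cr_ge0 ?ltW ?g1_gt0.
  have hb := ltW Hb; rewrite /Bw; apply/andP; split; lra.
have hc : `|\sum_(s' : S) P a s s' * (r s a s' + gamma * wv W z u s')| <= Bw M z.
  apply: avg_abs => // s'; apply: le_trans (ler_normD _ _) _.
  apply: (le_trans (y := Cr + gamma * Bw M z)).
    apply: lerD; first exact: r_bound.
    by rewrite normrM ger0_norm // ler_wpM2l.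
  have h1 := g1_gt0.
  rewrite -subr_ge0.
  have -> : Bw M z - (Cr + gamma * Bw M z) = (1 - gamma) * (beta + M + z).
    rewrite /Bw; have hne : 1 - gamma != 0 by exact: lt0r_neq0.
    by field.
  by apply: mulr_ge0; [exact: ltW | rewrite !addr_ge0 // ltW].
rewrite ler_norml; apply/andP; split.
  rewrite le_max; apply/orP; right; move: hc; rewrite ler_norml => /andP[] //.
rewrite ge_max; apply/andP; split; last by move: hc; rewrite ler_norml => /andP[].
have := IH s; move: (IH s) => _ _.
have hW' := hW s; rewrite ler_norml in hW'; case/andP: hW' => _ h2.
rewrite /Bw; have hq : 0 <= Cr / (1 - gamma) by rewrite divr_ge0 ?Cr_ge0 ?ltW ?g1_gt0.
have hb := ltW Hb; lra.
Qed.


Lemma G_shift W1 W2 c v x : 0 <= c -> (forall s, W1 s <= W2 s + c) ->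
  G W1 0 v x <= G W2 0 v x + gamma * c.
Proof.
move=> c0 hW; case: v => [|a u] /=; first by rewrite add0r mulr_ge0.
apply: cont_shift => // s'; exact: wv_shift.
Qed.

Definition M0 := (Cr / (1 - gamma) + beta) / (1 - gamma).

Lemma M0_ge0 : 0 <= M0.
Proof.
have h1 := ltW g1_gt0.
by rewrite /M0 divr_ge0 // addr_ge0 ?divr_ge0 ?Cr_ge0 // ltW.
Qed.

Lemma G_bound W v x : (forall s, `|W s| <= M0) -> `|G W 0 v x| <= M0.
Proof.
move=> hW; case: v => [|a u] /=; first by rewrite normr0 M0_ge0.
apply: avg_abs => // s'; apply: le_trans (ler_normD _ _) _.
apply: (le_trans (y := Cr + gamma * Bw M0 0)).
  apply: lerD; first exact: r_bound.
  by rewrite normrM ger0_norm // ler_wpM2l // wv_bound // M0_ge0.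
rewrite -subr_ge0.
have -> : M0 - (Cr + gamma * Bw M0 0) = (1 - gamma) * beta.
  rewrite /Bw /M0; have hne : 1 - gamma != 0 by exact: lt0r_neq0 g1_gt0.
  by field.
by apply: mulr_ge0; [exact: ltW g1_gt0 | exact: ltW].
Qed.

Section Plans.
Variables (a0 : A) (L : nat).

Definition plan W x : (L.+1).-tuple A :=
  Order.arg_max (nseq_tuple L.+1 a0) xpredT (fun v : (L.+1).-tuple A => G W 0 v x).

Definition T W x := G W 0 (plan W x) x.

Lemma T_ge W x v : size v = L.+1 -> G W 0 v x <= T W x.
Proof.
move=> sv; rewrite /T /plan.
case: (@arg_maxP _ R _ (nseq_tuple L.+1 a0) xpredT (fun v : (L.+1).-tuple A => G W 0 v x)) => //.
move=> p _ hp; exact: (hp (Tuple (introT eqP sv))).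
Qed.

Lemma T_lip W1 W2 c : 0 <= c -> (forall s, W1 s <= W2 s + c) -> forall x, T W1 x <= T W2 x + gamma * c.
Proof.
move=> c0 hW x; apply: le_trans (G_shift (plan W1 x) x c0 hW) _.
by rewrite lerD2r T_ge // size_tuple.
Qed.

Definition Wit n := iter n T (fun _ => 0).

Lemma Wit_bound n s : `|Wit n s| <= M0.
Proof.
elim: n s => [|n IH] s /=; first by rewrite normr0 M0_ge0.
exact: G_bound.
Qed.

Lemma Wit_step n : forall s, `|Wit n.+1 s - Wit n s| <= gamma ^+ n * (2 * M0).
Proof.
elim: n => [|n IH] s.
  rewrite expr0 mul1r /= subr0; apply: le_trans (G_bound _ _ _) _.
    by move=> ?; rewrite normr0 M0_ge0.
  by rewrite ler_peMl ?M0_ge0 // ler1n.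
have c0 : 0 <= gamma ^+ n * (2 * M0) by apply: mulr_ge0; [exact: exprn_ge0 | apply: mulr_ge0 => //; exact: M0_ge0].
rewrite ler_norml; apply/andP; split.
  have h : forall s', Wit n s' <= Wit n.+1 s' + gamma ^+ n * (2 * M0).
    by move=> s'; move: (IH s'); rewrite ler_norml => /andP[h1 _]; lra.
  have := T_lip c0 h s; rewrite /= exprS -mulrA; lra.
have h : forall s', Wit n.+1 s' <= Wit n s' + gamma ^+ n * (2 * M0).
  by move=> s'; move: (IH s'); rewrite ler_norml => /andP[_ h2]; lra.
have := T_lip c0 h s; rewrite /= exprS -mulrA; lra.
Qed.

End Plans.

Lemma avg_aff (I : finType) (w Z : I -> R) k B : \sum_i w i = 1 ->
  \sum_i w i * (k * Z i + B) = k * (\sum_i w i * Z i) + B.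
Proof.
move=> w1; under eq_bigr do rewrite mulrDr.
rewrite big_split /= (@avg_const _ w B w1) mulr_sumr; congr (_ + _).
by apply: eq_bigr => i _; rewrite mulrCA.
Qed.

Section GenB.
Variables (enc : seq S -> S -> seq bool -> R) (dec : seq (option S) -> seq A -> A -> R).
Hypothesis Henc : enc_valid enc.
Hypothesis Hdec : dec_valid dec.

Lemma Br_le k s (hs : seq S) (cs : seq bool) (as_ : seq A) (c : bool) (H : A -> S -> R) (B : R) :
  (forall a s', V enc dec k s' (rcons hs s) (rcons cs c) (rcons as_ a)
     <= gamma ^+ (size cs).+1 * H a s' + B) ->
  Br enc dec k s hs cs as_ c <= gamma ^+ size cs *
    (\sum_(a : A) dec (obs_of (rcons hs s) (rcons cs c)) as_ a *
       \sum_(s' : S) P a s s' * (r s a s' - beta * (c : nat)%:R + gamma * H a s')) + B.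
Proof.
move=> hV.
have d0 := dec0 Hdec; have d1 := dec1 Hdec.
apply: (le_trans (y := \sum_(a : A) dec (obs_of (rcons hs s) (rcons cs c)) as_ a *
       \sum_(s' : S) P a s s' * (gamma ^+ size cs * (r s a s' - beta * (c : nat)%:R + gamma * H a s') + B))).
  apply: ler_sum => a _; apply: ler_wpM2l => //; apply: ler_sum => s' _; apply: ler_wpM2l => //.
  rewrite [X in _ <= X + _]mulrDr -addrA lerD2l; apply: le_trans (hV a s') _.
  by rewrite exprS mulrCA mulrA.
under eq_bigr do rewrite avg_aff //.
by rewrite avg_aff.
Qed.


Lemma avg2_shift (d : A -> R) (Z : A -> S -> R) s b : \sum_a d a = 1 ->
  \sum_(a : A) d a * \sum_(s' : S) P a s s' * (Z a s' + b) =
  \sum_(a : A) d a * \sum_(s' : S) P a s s' * Z a s' + b.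
Proof.
move=> d1.
under eq_bigr => a _ do under eq_bigr => s' _ do rewrite -[Z a s']mul1r.
under eq_bigr => a _ do rewrite avg_aff // mul1r -[X in _ * (X + b)]mul1r.
rewrite avg_aff // mul1r; congr (_ + _); apply: eq_bigr => a _.
Qed.

Lemma E_G_unfold W z m D x : Dvalid D ->
  Eseq m.+1 D (fun v => G W z v x) =
  \sum_(a : A) D [::] a * \sum_(s' : S) P a x s' *
      (r x a s' + gamma * Eseq m (fun u => D (a :: u)) (fun u => wv W z u s')).
Proof.
move=> hD /=; apply: eq_bigr => a _; congr (_ * _).
exact: (@E_aff m (fun u => D (a :: u)) S (P a x) (r x a) gamma (fun s' u => wv W z u s') (Dvalid_cons a hD)).
Qed.

Section GenC.
Variables (Wup : S -> R) (z K : R) (L : nat).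
Hypothesis HK0 : 0 <= K.
Hypothesis Hz : forall s, Cb <= - beta + Wup s + z.
Hypothesis HKw : forall u s, - K <= wv Wup z u s.
Hypothesis HT : forall v x, size v = L.+1 -> G Wup z v x <= Wup x.

Definition GB k := forall m s (hs : seq S) (cs : seq bool) (as_ : seq A) D, size hs = size cs ->
  (forall u a', D u a' = dec (obs_of hs cs ++ None :: nseq (size u) None) (as_ ++ u) a') ->
  V enc dec k s hs cs as_ <= gamma ^+ size cs * Eseq m D (fun u => wv Wup z u s)
                             + gamma ^+ (size cs + k) * K.

Lemma gen_a k : GB k -> forall x (hs : seq S) (cs : seq bool) (as_ : seq A), size hs = size cs ->
  Br enc dec k x hs cs as_ true <= gamma ^+ size cs * (- beta + Wup x) + gamma ^+ (size cs + k.+1) * K.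
Proof.
move=> IH x hs cs as_ hsz.
pose D0 := fun u a' => dec (obs_of (rcons hs x) (rcons cs true) ++ nseq (size u) None) (as_ ++ u) a'.
have hD0 : Dvalid D0 by move=> u; split; [move=> a; exact: dec0 | exact: dec1].
have child : forall a s', V enc dec k s' (rcons hs x) (rcons cs true) (rcons as_ a) <=
    gamma ^+ (size cs).+1 * Eseq L (fun u => D0 (a :: u)) (fun u => wv Wup z u s')
    + gamma ^+ (size cs + k.+1) * K.
  move=> a s'; have := IH L s' (rcons hs x) (rcons cs true) (rcons as_ a) (fun u => D0 (a :: u)).
  rewrite !size_rcons addSnnS; apply; first by rewrite hsz.
  by move=> u a'; rewrite /D0 cat_rcons.
apply: le_trans (Br_le child) _; rewrite lerD2r; apply: ler_wpM2l; first exact: exprn_ge0.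
have hd : forall a, dec (obs_of (rcons hs x) (rcons cs true)) as_ a = D0 [::] a.
  by move=> a; rewrite /D0 /= !cats0.
under eq_bigr => a _ do rewrite hd.
under eq_bigr => a _ do under eq_bigr => s' _ do rewrite addrAC.
rewrite avg2_shift; last by case: (hD0 [::]).
rewrite -E_G_unfold // mulr1 addrC lerD2l.
have [v [sv hv]] := E_max L.+1 (fun v => G Wup z v x) hD0.
apply: le_trans hv _; exact: HT.
Qed.


Lemma gen_b k : GB k.
Proof.
elim: k => [|k IH] m s hs cs as_ D hsz hD.
  have hDv : Dvalid D by move=> u; split; [move=> a; rewrite hD; exact: dec0 | under eq_bigr do rewrite hD; exact: dec1].
  rewrite /= addn0 -mulrDr; apply: mulr_ge0; first exact: exprn_ge0.
  have h := @E_le m D (fun _ => - K) (fun u => wv Wup z u s) hDv (fun u => HKw u s).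
  rewrite E_const // in h; lra.
have hDv : Dvalid D by move=> u; split; [move=> a; rewrite hD; exact: dec0 | under eq_bigr do rewrite hD; exact: dec1].
have hK' : 0 <= gamma ^+ (size cs + k.+1) * K by rewrite mulr_ge0 ?exprn_ge0.
case: m => [|m].
  apply: le_trans (ler_norm _) _; apply: le_trans (V_bound Henc Hdec _ _ _ _ _) _.
  rewrite /= -[X in X <= _]addr0; apply: lerD => //.
  by apply: ler_wpM2l; [exact: exprn_ge0 | exact: Hz].
rewrite VS.
have ht := gen_a IH s as_ hsz.
have hf : Br enc dec k s hs cs as_ false <=
    gamma ^+ size cs * Eseq m.+1 D (fun v => G Wup z v s) + gamma ^+ (size cs + k.+1) * K.
  have child : forall a s', V enc dec k s' (rcons hs s) (rcons cs false) (rcons as_ a) <=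
      gamma ^+ (size cs).+1 * Eseq m (fun u => D (a :: u)) (fun u => wv Wup z u s')
      + gamma ^+ (size cs + k.+1) * K.
    move=> a s'; have := IH m s' (rcons hs s) (rcons cs false) (rcons as_ a) (fun u => D (a :: u)).
    rewrite !size_rcons addSnnS; apply; first by rewrite hsz.
    by move=> u a'; rewrite hD obs_rcons // cat_rcons /= cat_rcons.
  apply: le_trans (Br_le child) _; rewrite lerD2r; apply: ler_wpM2l; first exact: exprn_ge0.
  have hd : forall a, dec (obs_of (rcons hs s) (rcons cs false)) as_ a = D [::] a.
    by move=> a; rewrite hD obs_rcons // -cats1 cats0.
  under eq_bigr => a _ do rewrite hd.
  rewrite E_G_unfold //.
  under eq_bigr => a _ do under eq_bigr => s' _ do rewrite mulr0 subr0.
  by [].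
set e := enc hs s cs.
have he : 0 <= e <= 1 by exact: Henc.
apply: (le_trans (y := e * (gamma ^+ size cs * (- beta + Wup s) + gamma ^+ (size cs + k.+1) * K)
   + (1 - e) * (gamma ^+ size cs * Eseq m.+1 D (fun v => G Wup z v s) + gamma ^+ (size cs + k.+1) * K))).
  by case/andP: he => e0 e1; apply: lerD; apply: ler_wpM2l => //; rewrite subr_ge0.
set g := gamma ^+ size cs; set B := gamma ^+ (size cs + k.+1) * K.
have -> : e * (g * (- beta + Wup s) + B) + (1 - e) * (g * Eseq m.+1 D (fun v => G Wup z v s) + B)
   = g * (e * (- beta + Wup s) + (1 - e) * Eseq m.+1 D (fun v => G Wup z v s)) + B by ring.
rewrite lerD2r; apply: ler_wpM2l; first exact: exprn_ge0.
rewrite -(E_const m.+1 (- beta + Wup s) hDv) -!E_scale -E_add.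
apply: E_leS => // a u; rewrite wv_cons /G.
apply: conv_le => //; rewrite le_max ?lexx ?orbT //.
Qed.

End GenC.
End GenB.


Lemma Br_ge (enc : seq S -> S -> seq bool -> R) (dec : seq (option S) -> seq A -> A -> R) :
  dec_valid dec ->
  forall k s (hs : seq S) (cs : seq bool) (as_ : seq A) (c : bool) (H : A -> S -> R) (B : R),
  (forall a s', gamma ^+ (size cs).+1 * H a s' + B <=
     V enc dec k s' (rcons hs s) (rcons cs c) (rcons as_ a)) ->
  gamma ^+ size cs *
    (\sum_(a : A) dec (obs_of (rcons hs s) (rcons cs c)) as_ a *
       \sum_(s' : S) P a s s' * (r s a s' - beta * (c : nat)%:R + gamma * H a s')) + B
  <= Br enc dec k s hs cs as_ c.
Proof.
move=> Hdec k s hs cs as_ c H B hV.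
have d0 := dec0 Hdec; have d1 := dec1 Hdec.
apply: (le_trans (y := \sum_(a : A) dec (obs_of (rcons hs s) (rcons cs c)) as_ a *
       \sum_(s' : S) P a s s' * (gamma ^+ size cs * (r s a s' - beta * (c : nat)%:R + gamma * H a s') + B))); last first.
  apply: ler_sum => a _; apply: ler_wpM2l => //; apply: ler_sum => s' _; apply: ler_wpM2l => //.
  rewrite [X in X + _ <= _]mulrDr -addrA lerD2l; apply: le_trans _ (hV a s').
  by rewrite exprS mulrCA mulrA.
under [X in _ <= X]eq_bigr do rewrite avg_aff //.
by rewrite avg_aff.
Qed.

Lemma avg1_shift (Z : S -> R) a s b :
  \sum_(s' : S) P a s s' * (Z s' + b) = \sum_(s' : S) P a s s' * Z s' + b.
Proof.
under eq_bigr => s' _ do rewrite -[Z s']mul1r.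
by rewrite avg_aff // mul1r.
Qed.

Lemma dec_struct_sum (g : nat -> option S -> A) os (as_ : seq A) (X : A -> R) :
  \sum_(a : A) dec_struct R g os as_ a * X a = X (g (summary os).1 (summary os).2).
Proof.
rewrite (bigD1 (g (summary os).1 (summary os).2)) //= /dec_struct /= eqxx mul1r big1 ?addr0 //.
by move=> a /negbTE ->; rewrite mul0r.
Qed.

Lemma dec_struct_valid (g : nat -> option S -> A) : dec_valid (dec_struct R g).
Proof.
move=> os as_; split; first by move=> a; rewrite /dec_struct /= ler0n.
transitivity (\sum_(a : A) dec_struct R g os as_ a * 1).
  by apply: eq_bigr => a _; rewrite mulr1.
exact: (dec_struct_sum g os as_ (fun _ => 1)).
Qed.

Lemma enc_struct_valid (f : S -> nat -> option S -> bool) : enc_valid (enc_struct R f).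
Proof. by move=> hs s cs; rewrite /enc_struct /=; case: (f _ _ _) => /=; rewrite ?lexx ?ler01. Qed.

Section Str.
Variables (W' : S -> R) (K : R) (a0 : A) (pl : option S -> seq A).
Hypothesis HKs : forall u s, wv W' 0 u s <= K.
Hypothesis HTl : forall x, W' x <= G W' 0 (pl (Some x)) x.
Hypothesis Hnil : forall x, pl (Some x) != [::].

Definition fS (s : S) (j : nat) (xo : option S) : bool :=
  match drop j (pl xo) with
  | [::] => true
  | a :: u => cont W' 0 a u s < - beta + W' s
  end.

Definition gS (j : nat) (xo : option S) : A := nth a0 (pl xo) j.

Local Notation encS := (enc_struct R fS).
Local Notation decS := (dec_struct R gS).

Definition SB k := forall s (hs : seq S) (cs : seq bool) (as_ : seq A) j xo, size hs = size cs ->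
  summary (rcons (obs_of hs cs) None) = (j, xo) ->
  gamma ^+ size cs * wv W' 0 (drop j (pl xo)) s - gamma ^+ (size cs + k) * K
  <= V encS decS k s hs cs as_.

Lemma str_a k : SB k -> forall x (hs : seq S) (cs : seq bool) (as_ : seq A), size hs = size cs ->
  gamma ^+ size cs * (- beta + W' x) - gamma ^+ (size cs + k.+1) * K
  <= Br encS decS k x hs cs as_ true.
Proof.
move=> IH x hs cs as_ hsz.
case hpl: (pl (Some x)) => [|a1 u1]; first by move: (Hnil x); rewrite hpl.
have child : forall a s', gamma ^+ (size cs).+1 * wv W' 0 u1 s' + - (gamma ^+ (size cs + k.+1) * K)
    <= V encS decS k s' (rcons hs x) (rcons cs true) (rcons as_ a).
  move=> a s'; have := IH s' (rcons hs x) (rcons cs true) (rcons as_ a) 1%N (Some x).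
  rewrite !size_rcons addSnnS hpl /= drop0; apply; first by rewrite hsz.
  by rewrite obs_rcons // !summary_rcons.
apply: le_trans (Br_ge (dec_struct_valid gS) child).
rewrite lerD2r; apply: ler_wpM2l; first exact: exprn_ge0.
rewrite dec_struct_sum obs_rcons // summary_rcons /gS hpl /=.
rewrite mulr1.
under eq_bigr => s' _ do rewrite addrAC.
rewrite avg1_shift; have := HTl x; rewrite hpl /= /cont; lra.
Qed.

Lemma str_b k : SB k.
Proof.
elim: k => [|k IH] s hs cs as_ j xo hsz hsum.
  rewrite /= addn0 -mulrBr; rewrite mulr_ge0_le0 //; first exact: exprn_ge0.
  by rewrite subr_le0.
rewrite VS.
have he : encS hs s cs = (fS s j xo : nat)%:R by rewrite /enc_struct hsum.
rewrite he.
case hf: (fS s j xo); rewrite /= ?subrr ?subr0 ?mul1r ?mul0r ?addr0 ?add0r.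
  apply: le_trans (str_a IH s as_ hsz); rewrite lerD2r; apply: ler_wpM2l; first exact: exprn_ge0.
  move: hf; rewrite /fS; case: (drop j (pl xo)) => [|a u] /=; first by rewrite addr0.
  by move=> hlt; rewrite ge_max lexx /= ltW.
move: hf; rewrite /fS; case hd: (drop j (pl xo)) => [//|a u] /= hnlt.
have child : forall a' s', gamma ^+ (size cs).+1 * wv W' 0 u s' + - (gamma ^+ (size cs + k.+1) * K)
    <= V encS decS k s' (rcons hs s) (rcons cs false) (rcons as_ a').
  move=> a' s'; have := IH s' (rcons hs s) (rcons cs false) (rcons as_ a') j.+1 xo.
  have hu : drop j.+1 (pl xo) = u by rewrite -addn1 addnC -drop_drop hd /= drop0.
  rewrite !size_rcons addSnnS hu; apply; first by rewrite hsz.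
  by rewrite obs_rcons // summary_rcons hsum.
apply: le_trans (Br_ge (dec_struct_valid gS) child).
rewrite lerD2r; apply: ler_wpM2l; first exact: exprn_ge0.
rewrite dec_struct_sum obs_rcons // hsum /gS.
have -> : nth a0 (pl xo) j = a by rewrite -[j]addn0 -nth_drop hd.
have -> : \sum_(s' : S) P a s s' * (r s a s' - beta * (false : nat)%:R + gamma * wv W' 0 u s') = cont W' 0 a u s.
  by apply: eq_bigr => s' _; rewrite mulr0 subr0.
rewrite ge_max lexx andbT leNgt hnlt //.

Qed.

End Str.

Lemma seq_geom (u : nat -> R) (C : R) : 0 <= C ->
  (forall n, `|u n.+1 - u n| <= gamma ^+ n * ((1 - gamma) * C)) ->
  cvgn u /\ forall n, u n - gamma ^+ n * C <= limn u /\ limn u <= u n + gamma ^+ n * C.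
Proof.
move=> C0 hd.
have eqg : forall i, gamma ^+ i * ((1 - gamma) * C) = gamma ^+ i * C - gamma ^+ i.+1 * C.
  by move=> i; rewrite exprS; ring.
have monoa : forall n k, u (n + k)%N + gamma ^+ (n + k) * C <= u n + gamma ^+ n * C.
  move=> n; elim=> [|k IH]; first by rewrite addn0.
  apply: le_trans IH; rewrite addnS.
  have := hd (n + k)%N; rewrite eqg ler_norml => /andP[_ h]; lra.
have monob : forall n k, u n - gamma ^+ n * C <= u (n + k)%N - gamma ^+ (n + k) * C.
  move=> n; elim=> [|k IH]; first by rewrite addn0.
  apply: le_trans IH _; rewrite addnS.
  have := hd (n + k)%N; rewrite eqg ler_norml => /andP[h _]; lra.
have gC : forall n, 0 <= gamma ^+ n * C by move=> n; rewrite mulr_ge0 ?exprn_ge0.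
pose a n := u n + gamma ^+ n * C.
have ha : {homo a : n m / (n <= m)%N >-> (m <= n)}.
  by move=> n m hnm; rewrite /a -(subnKC hnm); apply: monoa.
have la : has_lbound (range a).
  exists (u 0%N - C) => _ [n _ <-]; rewrite /a.
  have := monob 0%N n; rewrite add0n expr0 mul1r => h.
  by apply: le_trans h _; have := gC n; lra.
have ca : cvgn a := cvgP _ (nonincreasing_cvgn ha la).
have hg : `|gamma| < 1 by rewrite ger0_norm.
have cq : cvgn (fun n => gamma ^+ n * C).
  exact: (is_cvgM (cvgP _ (cvg_expr hg)) (is_cvg_cst C)).
have cu : cvgn u.
  have -> : u = (fun n => a n - gamma ^+ n * C).
    by apply: funext => n; rewrite /a addrK.
  exact: is_cvgB.
split=> // n; split.
  apply: limr_ge => //; exists n => // m /= hm.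
  by rewrite -(subnKC hm); apply: le_trans (monob n (m - n)%N) _; rewrite lerBlDr lerDl.
apply: limr_le => //; exists n => // m /= hm.
by rewrite -(subnKC hm); apply: le_trans _ (monoa n (m - n)%N); rewrite lerDl.
Qed.

Lemma G_shiftz z W1 W2 c v x : 0 <= c -> (forall s, W1 s <= W2 s + c) ->
  G W1 z v x <= G W2 z v x + gamma * c.
Proof.
move=> c0 hW; case: v => [|a u] /=; first by rewrite add0r mulr_ge0.
apply: cont_shift => // s'; exact: wv_shift.
Qed.

Lemma G_z W z v x : 0 <= z -> G W z v x <= G W 0 v x + gamma ^+ size v * z.
Proof.
move=> z0; case: v => [|a u] /=; first by rewrite expr0 mul1r addrC addr0.
rewrite exprS -mulrA; apply: cont_shift; first by rewrite mulr_ge0 ?exprn_ge0.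
by move=> s'; apply: wv_z.
Qed.

Lemma ex_pow_le X c : 0 <= X -> 0 < c -> exists n : nat, gamma ^+ n * X <= c.
Proof.
move=> X0 c0.
have hg : `|gamma| < 1 by rewrite ger0_norm.
have hc : 0 < c / (X + 1) by rewrite divr_gt0 // ltr_wpDl.
have := @cvgr0_norm_lt R R nat _ _ (fun n => gamma ^+ n) (cvg_expr hg) _ hc.
case=> N _ hN; exists N; have := hN N (leqnn N); rewrite /= ger0_norm ?exprn_ge0 // => h.
have hX1 : 0 < X + 1 by rewrite ltr_wpDl.
rewrite ltr_pdivlMr // in h.
apply: le_trans (ltW h); apply: ler_wpM2l; [exact: exprn_ge0 | by rewrite lerDl].
Qed.

Section Final.
Variable mu0 : S -> R.
Hypothesis Hmu0 : forall s, 0 <= mu0 s.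
Hypothesis Hmu1 : \sum_(s : S) mu0 s = 1.

Lemma mu_shift (F : S -> R) c : \sum_(s : S) mu0 s * (F s + c) = \sum_(s : S) mu0 s * F s + c.
Proof.
under eq_bigr => s _ do rewrite -[F s]mul1r.
by rewrite avg_aff // mul1r.
Qed.

Lemma mu_le (F G : S -> R) : (forall s, F s <= G s) ->
  \sum_(s : S) mu0 s * F s <= \sum_(s : S) mu0 s * G s.
Proof. by move=> h; apply: ler_sum => s _; apply: ler_wpM2l. Qed.

Lemma J_bounds enc dec : enc_valid enc -> dec_valid dec -> forall T,
  Jfin P r gamma beta mu0 enc dec T - gamma ^+ T * Cb <= Jinf P r gamma beta mu0 enc dec /\
  Jinf P r gamma beta mu0 enc dec <= Jfin P r gamma beta mu0 enc dec T + gamma ^+ T * Cb.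
Proof.
move=> Henc Hdec T.
have hC : (1 - gamma) * Cb = Cr + beta.
  rewrite /Cb; have hne : 1 - gamma != 0 by exact: lt0r_neq0 g1_gt0.
  by field.
have step : forall m, `|Jfin P r gamma beta mu0 enc dec m.+1 - Jfin P r gamma beta mu0 enc dec m|
    <= gamma ^+ m * ((1 - gamma) * Cb).
  move=> m; rewrite hC /Jfin -sumrB.
  under eq_bigr do rewrite -mulrBr.
  apply: avg_abs => // s0.
  by have := V_step Henc Hdec m s0 [::] [::] [::]; rewrite add0n.
have [_ h] := @seq_geom (fun T => Jfin P r gamma beta mu0 enc dec T) Cb Cb_ge0 step.
exact: h.
Qed.


Lemma main_thm enc dec : enc_valid enc -> dec_valid dec -> forall eps, 0 < eps ->
  exists (f : S -> nat -> option S -> bool) (g : nat -> option S -> A),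
    Jinf P r gamma beta mu0 enc dec - eps
    <= Jinf P r gamma beta mu0 (enc_struct R f) (dec_struct R g).
Proof.
move=> Henc Hdec eps heps.
have [a0 _] : exists a : A, true.
  case: (pickP (@predT A)) => [a1 _|h]; first by exists a1.
  exfalso; move: (dec1 Hdec [::] [::]); rewrite big_pred0 // => /esym/eqP.
  by rewrite oner_eq0.
have g1 := g1_gt0.
have hne : 1 - gamma != 0 by exact: lt0r_neq0.
pose eta := eps * (1 - gamma) / 8.
have eta0 : 0 < eta by rewrite /eta !mulr_gt0 // invr_gt0.
pose z := Cb + beta + M0 + 1.
have z0 : 0 <= z by rewrite /z !addr_ge0 ?Cb_ge0 ?M0_ge0 // ltW.
have [L hL] := ex_pow_le z0 eta0.
have M20 : 0 <= 2 * M0 by rewrite mulr_ge0 ?M0_ge0.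
have [n hn] := ex_pow_le M20 eta0.
pose W := Wit a0 L n.
pose delta := gamma ^+ n * (2 * M0).
have d0 : 0 <= delta by rewrite mulr_ge0 ?exprn_ge0.
have hWb : forall s, `|W s| <= M0 := Wit_bound a0 L n.
have hTW : forall s, `|T a0 L W s - W s| <= delta := Wit_step a0 L n.
pose e := (delta + eta) / (1 - gamma).
pose e' := delta / (1 - gamma).
have e0 : 0 <= e by apply: divr_ge0; [rewrite addr_ge0 // ltW | exact: ltW].
have e'0 : 0 <= e' by apply: divr_ge0 => //; exact: ltW.
have ee : delta + eta + gamma * e = e by rewrite /e; field.
have ee' : delta + gamma * e' = e' by rewrite /e'; field.
pose Wup := fun s => W s + e.
pose W' := fun s => W s - e'.
pose K := Bw (M0 + e + e') z.
have hq : 0 <= Cr / (1 - gamma) by apply: divr_ge0; [exact: Cr_ge0 | exact: ltW].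
have K0 : 0 <= K.
  by rewrite /K /Bw; have := M0_ge0; have := ltW Hb; lra.
have HT : forall v x, size v = L.+1 -> G Wup z v x <= Wup x.
  move=> v x sv.
  have h1 : G Wup z v x <= G W z v x + gamma * e.
    by apply: G_shiftz => // s; rewrite /Wup.
  have h2 : G W z v x <= G W 0 v x + gamma ^+ L.+1 * z by rewrite -sv; apply: G_z.
  have h3 : G W 0 v x <= T a0 L W x := T_ge a0 W x sv.
  have h4 : gamma ^+ L.+1 * z <= eta.
    apply: (le_trans _ hL); rewrite exprS -mulrA ler_piMl // ?mulr_ge0 ?exprn_ge0 //; exact: ltW.
  have := hTW x; rewrite ler_norml => /andP[_ h5].
  rewrite /Wup; lra.
have Hz : forall s, Cb <= - beta + Wup s + z.
  move=> s; have := hWb s; rewrite ler_norml => /andP[hh1 _].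
  rewrite /Wup /z; lra.
have HKw : forall u s, - K <= wv Wup z u s.
  move=> u s.
  have hb : forall s, `|Wup s| <= M0 + e.
    move=> s'; apply: le_trans (ler_normD _ _) _; rewrite (ger0_norm e0) lerD2r; exact: hWb.
  have hM : 0 <= M0 + e by rewrite addr_ge0 ?M0_ge0.
  have := @wv_bound Wup z (M0 + e) hM z0 hb u s.
  rewrite ler_norml => /andP[hh _]; apply: le_trans hh.
  by rewrite lerN2 /K /Bw; lra.
have [ust [sust hust]] := E_max L (fun u => \sum_(s0 : S) mu0 s0 * wv Wup z u s0)
  (D := fun u a => dec (None :: nseq (size u) None) u a)
  (fun u => conj (fun a => dec0 Hdec _ _ a) (dec1 Hdec _ _)).
have upper : forall T, Jfin P r gamma beta mu0 enc dec T <=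
    \sum_(s0 : S) mu0 s0 * wv Wup z ust s0 + gamma ^+ T * K.
  move=> T; rewrite /Jfin.
  apply: (le_trans (y := \sum_(s0 : S) mu0 s0 *
     (Eseq L (fun u a => dec (None :: nseq (size u) None) u a) (fun u => wv Wup z u s0) + gamma ^+ T * K))).
    apply: mu_le => s0.
    have := @gen_b enc dec Henc Hdec Wup z K L K0 Hz HKw HT T L s0 [::] [::] [::]
      (fun u a => dec (None :: nseq (size u) None) u a) erefl (fun u a => erefl).
    by rewrite /= expr0 mul1r add0n.
  rewrite mu_shift lerD2r; apply: le_trans hust; rewrite E_sum; apply: ler_sum => s0 _; by rewrite E_scale.
pose pl := fun xo : option S => match xo with None => a0 :: ust | Some x => (plan a0 L W x : seq A) end.
have HTl : forall x, W' x <= G W' 0 (pl (Some x)) x.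
  move=> x.
  have h1 : G W 0 (pl (Some x)) x <= G W' 0 (pl (Some x)) x + gamma * e'.
    by apply: G_shift => // s; rewrite /W' subrK.
  have h2 : T a0 L W x = G W 0 (pl (Some x)) x by [].
  have := hTW x; rewrite ler_norml h2 => /andP[h3 _].
  rewrite /W'; lra.
have Hnil : forall x, pl (Some x) != [::].
  by move=> x; rewrite /pl -size_eq0 size_tuple.
have HKs : forall u s, wv W' 0 u s <= K.
  move=> u s.
  have hb : forall s, `|W' s| <= M0 + e'.
    move=> s'; apply: le_trans (ler_normB _ _) _; rewrite (ger0_norm e'0) lerD2r; exact: hWb.
  have hM : 0 <= M0 + e' by rewrite addr_ge0 ?M0_ge0.
  have := @wv_bound W' 0 (M0 + e') hM (lexx 0) hb u s.
  rewrite ler_norml => /andP[_ hh]; apply: (le_trans hh).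
  by rewrite /K /Bw; lra.
exists (fS W' pl), (gS a0 pl).
have lower : forall T, \sum_(s0 : S) mu0 s0 * wv W' 0 ust s0 - gamma ^+ T * K <=
    Jfin P r gamma beta mu0 (enc_struct R (fS W' pl)) (dec_struct R (gS a0 pl)) T.
  move=> T; rewrite /Jfin -mu_shift; apply: mu_le => s0.
  have := @str_b W' K a0 pl HKs HTl Hnil T s0 [::] [::] [::] 1%N None erefl erefl.
  by rewrite /= drop0 expr0 mul1r add0n.
have encV := enc_struct_valid (fS W' pl).
have decV := dec_struct_valid (gS a0 pl).
have comp : \sum_(s0 : S) mu0 s0 * wv Wup z ust s0 <=
    \sum_(s0 : S) mu0 s0 * wv W' 0 ust s0 + (e + e' + eta).
  rewrite -mu_shift; apply: mu_le => s0.
  have h1 : wv Wup z ust s0 <= wv W z ust s0 + e by apply: wv_shift => // s; rewrite /Wup.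
  have h2 := wv_z W z0 ust s0; rewrite sust in h2.
  have h3 : wv W 0 ust s0 <= wv W' 0 ust s0 + e' by apply: wv_shift => // s; rewrite /W' subrK.
  lra.
have gap : e + e' + eta <= eps / 2.
  have h1 : e + e' = 2 * (delta / (1 - gamma)) + eta / (1 - gamma) by rewrite /e /e'; field.
  have h2 : eta / (1 - gamma) = eps / 8 by rewrite /eta; field.
  have h3 : delta / (1 - gamma) <= eta / (1 - gamma).
    by apply: ler_wpM2r; [rewrite invr_ge0 ltW | exact: hn].
  have h4 : eps * (1 - gamma) <= eps.
    rewrite -[X in _ <= X]mulr1 ler_wpM2l ?(ltW heps) //; have := Hg0; lra.
  have h5 : eta = eps * (1 - gamma) / 8 by [].
  lra.
have X0 : 0 <= 2 * K + 2 * Cb by have := Cb_ge0; lra.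
have eps2 : 0 < eps / 2 by lra.
have [T hT] := ex_pow_le X0 eps2.
have [_ hg] := J_bounds Henc Hdec T.
have [hs _] := J_bounds encV decV T.
have hu := upper T; have hl := lower T.
have hX : gamma ^+ T * (2 * K + 2 * Cb) = 2 * (gamma ^+ T * K) + 2 * (gamma ^+ T * Cb) by ring.
lra.
Qed.






End Final.
End Main.

Unset Implicit Arguments.
Set Strict Implicit.
Import Order.TTheory GRing.Theory Num.Theory.
Local Open Scope ring_scope.

Theorem theorem1 (R : realType) (S A : finType)
  (P : A -> S -> S -> R) (r : S -> A -> S -> R) (gamma beta : R)
  (mu0 : S -> R) :
  (forall a s s', 0 <= P a s s') ->
  (forall a s, \sum_(s' : S) P a s s' = 1) ->
  0 <= gamma < 1 -> 0 < beta ->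
  (forall s, 0 <= mu0 s) -> \sum_(s : S) mu0 s = 1 ->
  forall (enc : seq S -> S -> seq bool -> R)
         (dec : seq (option S) -> seq A -> A -> R),
  enc_valid enc -> dec_valid dec ->
  forall eps : R, 0 < eps ->
  exists (f : S -> nat -> option S -> bool) (g : nat -> option S -> A),
    Jinf P r gamma beta mu0 enc dec - eps
    <= Jinf P r gamma beta mu0 (enc_struct R f) (dec_struct R g).
Proof.
move=> HP0 HP1 /andP[Hg0 Hg1] Hb Hmu0 Hmu1 enc dec Henc Hdec eps heps.
exact: (@main_thm R S A P r gamma beta HP0 HP1 Hg0 Hg1 Hb mu0 Hmu0 Hmu1 enc dec Henc Hdec eps heps).
Qed.
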